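(* Let $\mathbf A$ be a balanced residuated semigroup satisfying (H1), (H2), (H3) (for all $x,y$: if $1_x=1_y$ then $1_{xy}=1_x$, $1_{x/y}=1_x$ and $1_{x\backslash y}=1_x$, where $1_x:=x/x$). For each positive idempotent $p$ of $\mathbf A$ let $A_p:=\{a\in A: a\backslash a=p\}$. Then $\{A_p: p \text{ a positive idempotent}\}$ is a partition of $A$; each $A_p$ is closed under $\cdot,\backslash,/$, so that $\mathbf A_p=\langle A_p,\le,\cdot,\backslash,/,p\rangle$ (restricted order and operations) is a residuated monoid with global identity $p$; and each $\mathbf A_p$ is integrally closed, i.e. $a\backslash a=p=a/a$ for all $a\in A_p$.
   Context: A residuated semigroup is a structure $\langle A,\le,\cdot,\backslash,/\rangle$ where $\langle A,\le\rangle$ is a poset, $\langle A,\cdot\rangle$ is a semigroup (we write $xy$ for $x\cdot y$), and for all $x,y,z$: $xy\le z\iff x\le z/y\iff y\le x\backslash z$. An element $p$ is positive if $a\le pa$ and $a\le ap$ for all $a$; idempotent if $pp=p$. A residuated semigroup is balanced if it satisfies $x\backslash x=x/x$ and every element of the form $a\backslash a$ or $a/a$ is positive. A residuated monoid is a residuated semigroup with a global identity $1$ ($1a=a=a1$ for all $a$); it is integrally closed if $x\backslash x=1$ for all $x$. *)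

(* Defs.v *)
Record ResSemigroup := {
  car :> Type;
  le : car -> car -> Prop;
  mul : car -> car -> car;
  ldiv : car -> car -> car;
  rdiv : car -> car -> car;
  le_refl : forall x, le x x;
  le_antisym : forall x y, le x y -> le y x -> x = y;
  le_trans : forall x y z, le x y -> le y z -> le x z;
  mul_assoc : forall x y z, mul (mul x y) z = mul x (mul y z);
  res_r : forall x y z, le (mul x y) z <-> le x (rdiv z y);
  res_l : forall x y z, le (mul x y) z <-> le y (ldiv x z)
}.

Arguments le {_} _ _.
Arguments mul {_} _ _.
Arguments ldiv {_} _ _.
Arguments rdiv {_} _ _.

Section Defs.
Variable A : ResSemigroup.

Definition positive (p : A) : Prop :=
  forall a : A, le a (mul p a) /\ le a (mul a p).

Definition idempotent (p : A) : Prop := mul p p = p.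

Definition balanced : Prop :=
  (forall x : A, ldiv x x = rdiv x x) /\
  (forall a : A, positive (ldiv a a) /\ positive (rdiv a a)).

Definition unit_of (x : A) : A := rdiv x x.

Definition H1 : Prop := forall x y : A, unit_of x = unit_of y -> unit_of (mul x y) = unit_of x.
Definition H2 : Prop := forall x y : A, unit_of x = unit_of y -> unit_of (rdiv x y) = unit_of x.
Definition H3 : Prop := forall x y : A, unit_of x = unit_of y -> unit_of (ldiv x y) = unit_of x.

Definition block (p a : A) : Prop := ldiv a a = p.

Definition pos_idem (p : A) : Prop := positive p /\ idempotent p.
End Defs.

Arguments positive {_} _.
Arguments idempotent {_} _.
Arguments unit_of {_} _.
Arguments block {_} _ _.
Arguments pos_idem {_} _.

(* Main.v *)
Require Import Defs.

Section S.
Variable A : ResSemigroup.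
Hypothesis B : balanced A.

Lemma rmul_u (a : A) : mul a (ldiv a a) = a.
Proof.
  apply le_antisym.
  - apply (proj2 (res_l A a (ldiv a a) a)). apply le_refl.
  - apply (proj2 (proj1 (proj2 B a) a)).
Qed.

Lemma lmul_u (a : A) : mul (ldiv a a) a = a.
Proof.
  apply le_antisym.
  - rewrite (proj1 B a). apply (proj2 (res_r A (rdiv a a) a a)). apply le_refl.
  - apply (proj1 (proj1 (proj2 B a) a)).
Qed.

Lemma u_pi (a : A) : pos_idem (ldiv a a).
Proof.
  split. apply (proj1 (proj2 B a)).
  unfold idempotent. apply le_antisym.
  - apply (proj1 (res_l A a _ a)). rewrite <- mul_assoc, !rmul_u. apply le_refl.
  - apply (proj1 (proj1 (proj2 B a) (ldiv a a))).
Qed.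

Lemma pi_self (p : A) : pos_idem p -> ldiv p p = p.
Proof.
  intros [Hp Hi]. apply le_antisym.
  - apply le_trans with (mul p (ldiv p p)). apply (proj1 (Hp _)). rewrite rmul_u. apply le_refl.
  - apply (proj1 (res_l A p p p)). rewrite Hi. apply le_refl.
Qed.
End S.

Theorem proposition3p5 (A : ResSemigroup) :
  balanced A -> H1 A -> H2 A -> H3 A ->
  (* {A_p : p positive idempotent} is a partition of A *)
  ((forall p : A, pos_idem p -> exists a : A, block p a) /\
   (forall a : A, exists p : A, pos_idem p /\ block p a) /\
   (forall (p q a : A), pos_idem p -> pos_idem q ->
        block p a -> block q a -> p = q)) /\
  (* each A_p is closed under ., \, / and is a residuated monoid with
     global identity p, integrally closed *)
  (forall p : A, pos_idem p ->
     (forall a b : A, block p a -> block p b ->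
        block p (mul a b) /\ block p (ldiv a b) /\ block p (rdiv a b)) /\
     block p p /\
     (forall a : A, block p a -> mul p a = a /\ mul a p = a) /\
     (forall a : A, block p a -> ldiv a a = p /\ rdiv a a = p)).
Proof.
  intros B h1 h2 h3. unfold block. split; [split; [|split]|].
  - intros p Hp. exists p. apply pi_self; auto.
  - intros a. exists (ldiv a a). split; auto. apply u_pi; auto.
  - intros p q a _ _ E1 E2. congruence.
  - intros p Hp. split; [|split; [|split]].
    + intros a b Ea Eb.
      assert (Ua : unit_of a = p) by (unfold unit_of; rewrite <- (proj1 B a); auto).
      assert (Ub : unit_of b = p) by (unfold unit_of; rewrite <- (proj1 B b); auto).
      assert (E : unit_of a = unit_of b) by congruence.
      split; [|split]; rewrite (proj1 B).
      * exact (eq_trans (h1 a b E) Ua).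
      * exact (eq_trans (h3 a b E) Ua).
      * exact (eq_trans (h2 a b E) Ua).
    + apply pi_self; auto.
    + intros a Ea. subst p. split. apply lmul_u; auto. apply rmul_u; auto.
    + intros a Ea. split; auto. rewrite <- (proj1 B a); auto.
Qed.
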